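(* Let $X$ be a paracompact topological space, let $Y$ be a Banach space, and let $f:X\to Y$ be a function. Then $f$ is Baire-1 if and only if there is a sequence $(G_n)_{n=1}^{\infty}$ of open strips in $X\times Y$ such that $\bigcap_{n=1}^{\infty}G_n=gr(f)$ and $diam(G_n(x))\to 0$ as $n\to\infty$ for each $x\in X$.
   Context: $gr(f)=\{(x,f(x)):x\in X\}\subseteq X\times Y$ is the graph of $f$. For $G\subseteq X\times Y$ and $x\in X$, the vertical section is $G(x)=\{y\in Y:(x,y)\in G\}$ (identified with $G\cap(\{x\}\times Y)$). An open strip is an open set $G\subseteq X\times Y$ such that $G(x)$ is convex for every $x\in X$. The diameter is taken with respect to the norm of $Y$. A function is Baire-0 if it is continuous, and for a countable ordinal $\alpha\ge 1$ it is Baire-$\alpha$ if it is the pointwise limit of a sequence of functions $f_n$, each Baire-$\alpha_n$ for some $\alpha_n<\alpha$; in particular, Baire-1 functions are pointwise limits of sequences of continuous functions. *)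

(* Defs.v *)
From HB Require Import structures.
From mathcomp Require Import all_boot all_order all_algebra.
From mathcomp Require Import all_classical all_reals all_analysis.
Set Implicit Arguments. Unset Strict Implicit. Unset Printing Implicit Defensive.
Import Order.TTheory GRing.Theory Num.Theory.
Import numFieldNormedType.Exports.
Local Open Scope classical_set_scope.
Local Open Scope ring_scope.

Definition locally_finite_family (X : topologicalType) (J : Type)
  (V : J -> set X) : Prop :=
  forall x : X, exists N : set X, nbhs x N /\
    finite_set [set j | V j `&` N !=set0].

(* Paracompact (Engelking's convention: Hausdorff, and every open cover has
   a locally finite open refinement). *)
Definition paracompact (X : topologicalType) : Prop :=
  hausdorff_space X /\
  forall (I : Type) (U : I -> set X),
    (forall i, open (U i)) -> \bigcup_i U i = setT ->
    exists (J : Type) (V : J -> set X),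
      [/\ (forall j, open (V j)), \bigcup_j V j = setT,
          (forall j, exists i, V j `<=` U i) &
          locally_finite_family V].

Definition graph (X Y : Type) (f : X -> Y) : set (X * Y) :=
  [set p | p.2 = f p.1].

Definition vsection (X Y : Type) (G : set (X * Y)) (x : X) : set Y :=
  [set y | G (x, y)].

Definition open_strip (R : realType) (X : topologicalType)
  (Y : normedModType R) (G : set (X * Y)) : Prop :=
  open G /\ forall x : X, convex_set (vsection G x : set (convex_lmodType Y)).

Definition diam (R : realType) (Y : normedModType R) (A : set Y) : \bar R :=
  ereal_sup [set ((`|y - z|)%:E) | y in A & z in A].

Definition baire1 (R : realType) (X : topologicalType)
  (Y : normedModType R) (f : X -> Y) : Prop :=
  exists g : nat -> X -> Y, (forall n, continuous (g n)) /\
    forall x, (fun n => g n x) @ \oo --> f x.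

(* Main.v *)
Require Import Defs.
From HB Require Import structures.
From mathcomp Require Import all_boot all_order all_algebra.
From mathcomp Require Import all_classical all_reals all_analysis finmap.
From mathcomp Require Import ring lra.
Import Order.TTheory GRing.Theory Num.Theory.
Import numFieldNormedType.Exports.
Local Open Scope classical_set_scope.
Local Open Scope ring_scope.
Set Implicit Arguments. Unset Strict Implicit. Unset Printing Implicit Defensive.

Lemma lf_closure (X : topologicalType) (K : Type) (W : K -> set X) (P : set K) :
  locally_finite_family W ->
  closure (\bigcup_(k in P) W k) `<=` \bigcup_(k in P) closure (W k).
Proof.
move=> lf x clx; apply: contrapT => nx.
have [N [Nx finS]] := lf x.
have hB : forall k : {classic K}, exists B, P k -> nbhs x B /\ W k `&` B = set0.
  move=> k; have [Pk|nPk] := pselect (P k); last by exists setT.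
  have : ~ closure (W k) x by move=> c; apply: nx; exists k.
  move/existsNP=> [B /not_implyP [xB nWB]]; exists B => _; split => //.
  by apply/seteqP; split => // y Wy; apply: nWB; exists y.
have [B hB'] := choice hB.
pose S := [set k : {classic K} | W k `&` N !=set0].
have SPfin : finite_set (S `&` P) by apply: finite_setIl.
have hK : forall k : {classic K}, k \in fset_set (S `&` P) -> nbhs x (B k).
  by move=> k; rewrite in_fset_set // => /set_mem [_ Pk]; exact: (hB' k Pk).1.
have Hn := @filterI _ _ (nbhs_filter x) _ _ Nx (filter_bigI (nbhs_filter x) hK).
have [y [[k Pk Wy] [Ny By]]] := clx _ Hn.
have kS : (S `&` P) k by split => //; exists y.
have Bky : B k y by apply: By; rewrite /= in_fset_set //; apply/mem_set.
have := (hB' k Pk).2; rewrite -subset0 => /(_ y); apply; split => //.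
Qed.

Lemma key_sep (X : topologicalType) (C A : set X) : paracompact X -> closed C ->
  (forall c, C c -> exists U, [/\ open U, U c & closure U `&` A = set0]) ->
  exists W, [/\ open W, C `<=` W & closure W `&` A = set0].
Proof.
move=> [_ pc] clC hU.
have hU' : forall c : X, exists U : set X,
    C c -> [/\ open U, U c & closure U `&` A = set0].
  move=> c; have [Cc|nCc] := pselect (C c); last by exists set0.
  by have [U HU] := hU c Cc; exists U.
have [u hu] := choice hU'.
pose Uc (i : option X) : set X :=
  if i is Some c then [set y | C c /\ u c y] else ~` C.
have oUc : forall i, open (Uc i).
  case=> [c|] /=; last exact: closed_openC.
  have [Cc|nCc] := pselect (C c).
    have -> : [set y | C c /\ u c y] = u c.
      by apply/seteqP; split => y //= [].
    by case: (hu c Cc).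
  have -> : [set y | C c /\ u c y] = set0 by apply/seteqP; split => y // [].
  exact: open0.
have cov : \bigcup_i Uc i = setT.
  apply/seteqP; split => // y _.
  have [Cy|nCy] := pselect (C y); last by exists None.
  by exists (Some y) => //=; split => //; case: (hu y Cy).
have [J [V [oV covV ref lf]]] := pc _ Uc oUc cov.
pose P := [set j | V j `&` C !=set0].
exists (\bigcup_(j in P) V j); split.
- by apply: bigcup_open => j _; exact: oV j.
- move=> c Cc; have : setT c by [].
  by rewrite -covV => -[j _ Vjc]; exists j => //; exists c.
- apply/seteqP; split => // y [/(lf_closure (P:=P) lf) [j [z [Vz Cz]] clj] Ay].
  have [i sub] := ref j; case: i sub => [c|] sub.
  + have [Cc uc] := sub z Vz.
    have [_ _ e] := hu c Cc.
    have : (closure (u c) `&` A) y.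
      by split => //; apply: closureS clj => w /sub [].
    by rewrite e.
  + by have := sub z Vz.
Qed.

Lemma para_regular (X : topologicalType) (x : X) (C : set X) :
  paracompact X -> closed C -> ~ C x ->
  exists O, [/\ open O, O x & closure O `&` C = set0].
Proof.
move=> pX clC nCx.
have hX := pX.1; rewrite open_hausdorff in hX.
have [W [oW CW clW]] : exists W,
    [/\ open W, C `<=` W & closure W `&` [set x] = set0].
  apply: key_sep => // c Cc.
  have xc : x != c by apply/eqP => xc; apply nCx; rewrite xc.
  have [[A B] [/= xA cB] [/= oA oB /eqP AB0]] := hX x c xc.
  exists B; split => //; first exact: set_mem cB.
  apply/seteqP; split => // y [clB /= yx]; rewrite yx in clB.
  have : nbhs x A by apply: open_nbhs_nbhs; split => //; exact: set_mem xA.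
  move=> /clB [z [Bz Az]].
  by have : (A `&` B) z by []; rewrite AB0.
exists (~` closure W); split.
- exact/closed_openC/closed_closure.
- by move=> clWx; have : (closure W `&` [set x]) x by []; rewrite clW.
- apply/seteqP; split => // y [cly Cy].
  have : closure (~` W) y.
    by apply: closureS cly => w nw Ww; apply: nw; apply: subset_closure.
  rewrite -(closure_id _).1; last exact: open_closedC.
  by apply; apply: CW.
Qed.

Lemma para_normal (R : realType) (X : topologicalType) :
  paracompact X -> normal_space X.
Proof.
move=> pX; apply/(@normal_openP R X) => A B clA clB AB0.
have [W [oW BW clWA]] : exists W,
    [/\ open W, B `<=` W & closure W `&` A = set0].
  apply: key_sep => // b Bb; apply: para_regular => // Ab.
  by have : (A `&` B) b by []; rewrite AB0.
exists (~` closure W), W; split => //.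
- exact/closed_openC/closed_closure.
- by move=> a Aa clWa; have : (closure W `&` A) a by []; rewrite clWA.
- apply/seteqP; split => // y [nc Wy]; apply: nc; exact: subset_closure.
Qed.

Lemma para_shrink (X : topologicalType) (J : Type) (V : J -> set X) :
  paracompact X -> (forall j, open (V j)) -> \bigcup_j V j = setT ->
  exists F : J -> set X,
    [/\ forall j, closed (F j), forall j, F j `<=` V j & \bigcup_j F j = setT].
Proof.
move=> pX oV covV.
have hj : forall x : X, exists j, V j x.
  by move=> x; have : setT x by []; rewrite -covV => -[j _ ?]; exists j.
have [jx hjx] := choice hj.
have ho : forall x : X, exists O,
    [/\ open O, O x & closure O `&` ~` V (jx x) = set0].
  move=> x; apply: para_regular => //; first exact: open_closedC.
  by move=> /(_ (hjx x)).
have [ob ho'] := choice ho.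
have oob : forall x, open (ob x) by move=> x; case: (ho' x).
have cob : \bigcup_x ob x = setT.
  by apply/seteqP; split => // x _; exists x => //; case: (ho' x).
have [Kt [Ob [oO covO refO lfO]]] := pX.2 _ ob oob cob.
have [xk hxk] := choice refO.
exists (fun j => closure (\bigcup_(k in [set k | jx (xk k) = j]) Ob k)); split.
- move=> j; exact: closed_closure.
- move=> j y /(lf_closure lfO) [k /= ek clk]; apply: contrapT => nV.
  have [_ _ e] := ho' (xk k).
  have : (closure (ob (xk k)) `&` ~` V (jx (xk k))) y.
    by split; [apply: closureS clk; exact: hxk | rewrite ek].
  by rewrite e.
- apply/seteqP; split => // y _.
  have : setT y by []; rewrite -covO => -[k _ Oky].
  by exists (jx (xk k)) => //; apply: subset_closure; exists k.
Qed.

Lemma para_pu (R : realType) (X : topologicalType) (J : Type)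
    (V : J -> set X) :
  paracompact X -> (forall j, open (V j)) -> \bigcup_j V j = setT ->
  exists phi : J -> X -> R,
    [/\ forall j, continuous (phi j), forall j x, 0 <= phi j x,
        forall j x, phi j x != 0 -> V j x & forall x, exists j, phi j x = 1].
Proof.
move=> pX oV covV.
have [F [clF FV covF]] := para_shrink pX oV covV.
have nX := para_normal R pX.
have sep : forall j, uniform_separator (~` V j) (F j).
  move=> j; apply: (iffLR (@normal_separatorP R X) nX).
  - exact: open_closedC.
  - exact: clF.
  - by apply/seteqP; split => // y [nV /FV].
exists (fun j => @Urysohn X R (~` V j) (F j)); split.
- move=> j; exact: Urysohn_continuous.
- move=> j x; have : range (@Urysohn X R (~` V j) (F j)) (@Urysohn X R (~` V j) (F j) x)
    by exists x.
  by move=> /Urysohn_range; rewrite /= in_itv /= => /andP[].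
- move=> j x /eqP nz; apply: contrapT => nV; apply: nz.
  exact: (@Urysohn_sub0 X R _ _ (sep j) _ (ex_intro2 _ _ x nV erefl)).
- move=> x; have : setT x by []; rewrite -covF => -[j _ Fjx]; exists j.
  exact: (@Urysohn_sub1 X R _ _ (sep j) _ (ex_intro2 _ _ x Fjx erefl)).
Qed.

Lemma convex2 (R : realType) (Z : lmodType R) (C : set Z) (a b : Z) (t : R) :
  convex_set (C : set (convex_lmodType Z)) -> C a -> C b -> 0 <= t -> t <= 1 ->
  C (t *: a + (1 - t) *: b).
Proof.
move=> hC Ca Cb t0 t1.
exact: set_mem (hC a b (Itv01 t0 t1) (mem_set Ca) (mem_set Cb)).
Qed.

Lemma sum0_vec (R : realType) (Z : lmodType R) (I : Type) (r : seq I)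
    (w : I -> R) (y : I -> Z) :
  (forall i, 0 <= w i) -> \sum_(i <- r) w i = 0 -> \sum_(i <- r) w i *: y i = 0.
Proof.
move=> w0; elim: r => [|a r IH]; rewrite ?big_nil ?big_cons // => /eqP.
rewrite paddr_eq0 ?sumr_ge0 // => /andP[/eqP -> /eqP /IH ->].
by rewrite scale0r addr0.
Qed.

Lemma convex_comb (R : realType) (Z : lmodType R) (C : set Z) (I : Type)
    (r : seq I) (w : I -> R) (y : I -> Z) :
  convex_set (C : set (convex_lmodType Z)) -> (forall i, 0 <= w i) ->
  (forall i, w i != 0 -> C (y i)) ->
  0 < \sum_(i <- r) w i ->
  C ((\sum_(i <- r) w i)^-1 *: \sum_(i <- r) w i *: y i).
Proof.
move=> hC w0 wy; elim: r => [|a r IH]; first by rewrite big_nil ltxx.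
rewrite !big_cons.
have s0 : 0 <= \sum_(i <- r) w i by apply: sumr_ge0.
have [sr0|srp] := eqVneq (\sum_(i <- r) w i) 0.
  rewrite sr0 (sum0_vec y w0 sr0) !addr0 => wa0.
  rewrite scalerA mulVf ?scale1r; first by apply: wy; rewrite gt_eqF.
  by rewrite gt_eqF.
have spos : 0 < \sum_(i <- r) w i by rewrite lt_def srp s0.
have {}IH := IH spos.
have [wa0|wan] := eqVneq (w a) 0.
  by rewrite wa0 scale0r !add0r.
move=> _.
move: IH spos srp s0.
set s := \sum_(i <- r) w i; set v := \sum_(i <- r) w i *: y i => IH spos srp s0.
have wapos : 0 < w a by rewrite lt_def wan w0.
have ws : w a + s != 0 by rewrite gt_eqF // addr_gt0.
have -> : (w a + s)^-1 *: (w a *: y a + v) =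
    (w a / (w a + s)) *: y a + (1 - w a / (w a + s)) *: (s^-1 *: v).
  rewrite scalerDr !scalerA; congr (_ + _); first by rewrite mulrC.
  by congr (_ *: _); field; rewrite ws srp.
apply: convex2 => //; first by apply: wy.
- by rewrite divr_ge0 // addr_ge0.
- by rewrite ler_pdivrMr ?addr_gt0 // mul1r lerDl.
Qed.

Lemma seq_sum_cont (R : realType) (X : topologicalType) (Z : normedModType R)
    (I : Type) (r : seq I) (h : I -> X -> Z) :
  (forall i, continuous (h i)) -> continuous (fun x => \sum_(i <- r) h i x).
Proof.
move=> ch x; elim: r => [|a r IH].
  by under eq_fun do rewrite big_nil; rewrite ?big_nil; exact: cvg_cst.
under eq_fun do rewrite big_cons; rewrite ?big_cons.
exact: cvgD (ch a x) IH.
Qed.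

Lemma lf_sum_cont (R : realType) (X : topologicalType) (Z : normedModType R)
    (J : Type) (V : J -> set X) (h : J -> X -> Z) :
  locally_finite_family V -> (forall j, continuous (h j)) ->
  (forall j x, h j x != 0 -> V j x) ->
  continuous (fun x => \sum_(j \in [set: {classic J}]) h j x).
Proof.
move=> lf ch supp x.
have [N [Nx finS]] := lf x.
pose S := [set j : {classic J} | V j `&` N !=set0].
have Sfin : finite_set S by [].
have eqN : forall y, N y ->
    \sum_(j \in [set: {classic J}]) h j y = \sum_(j <- fset_set S) h j y.
  move=> y Ny; rewrite -(fsbig_widen S) ?fsbig_finite //.
  move=> j [_ nSj] /=; apply/eqP; apply: contrapT => /negP hj.
  by apply: nSj; exists y; split => //; apply: supp hj.
rewrite /continuous_at (eqN x (nbhs_singleton Nx)).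
apply: cvg_trans; last exact: (@seq_sum_cont R X Z {classic J} (fset_set S) h ch x).
apply: near_eq_cvg; near=> y; apply/esym/eqN; near: y; exact: Nx.
Unshelve. all: by end_near.
Qed.

Lemma fs_sum_eq (Z : nmodType) (J : Type) (P : set {classic J})
    (F : {classic J} -> Z) :
  finite_set P -> (forall j, F j != 0 -> P j) ->
  \sum_(j \in [set: {classic J}]) F j = \sum_(j <- fset_set P) F j.
Proof.
move=> Pfin supp; rewrite -(fsbig_widen P) ?fsbig_finite //.
move=> j [_ nPj] /=; apply/eqP; apply: contrapT => /negP hj.
by apply: nPj; apply: supp.
Qed.

Lemma sum_pos (R : realType) (I : eqType) (r : seq I) (w : I -> R) (j : I) :
  uniq r -> j \in r -> (forall i, 0 <= w i) -> 0 < w j ->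
  0 < \sum_(i <- r) w i.
Proof.
move=> ur jr w0 wj; rewrite (bigD1_seq j) //=.
by apply: (lt_le_trans wj); rewrite lerDl sumr_ge0.
Qed.

Lemma selection (R : realType) (X : topologicalType) (Y : normedModType R)
    (f : X -> Y) (H : set (X * Y)) :
  paracompact X -> open H ->
  (forall x, convex_set (vsection H x : set (convex_lmodType Y))) ->
  graph f `<=` H ->
  exists g : X -> Y, continuous g /\ forall x, H (x, g x).
Proof.
move=> pX oH cH gH.
pose U (a : X) := [set x | H (x, f a)].
have oU : forall a, open (U a).
  move=> a; have -> : U a = (fun x => (x, f a)) @^-1` H by [].
  apply: open_comp => // x _; apply: cvg_pair => //; exact: cvg_cst.
have cU : \bigcup_a U a = setT.
  by apply/seteqP; split => // x _; exists x => //; apply: gH.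
have [J [V [oV covV ref lf]]] := pX.2 _ U oU cU.
have [a ha] := choice ref.
have [phi [cphi phi0 phiV phi1]] := para_pu R pX oV covV.
pose s x := \sum_(j \in [set: {classic J}]) (phi j x : R^o).
pose v x := \sum_(j \in [set: {classic J}]) phi j x *: f (a j).
have cs : continuous s := @lf_sum_cont R X R^o J V phi lf cphi phiV.
have cv : continuous v.
  apply: (@lf_sum_cont R X Y J V (fun j x => phi j x *: f (a j)) lf).
    by move=> j x; apply: continuousZr_tmp; exact: cphi.
  move=> j x; rewrite scaler_eq0 negb_or => /andP[] *; exact: phiV.
have key : forall x, 0 < s x /\ H (x, (s x)^-1 *: v x).
  move=> x.
  have [N [Nx finS]] := lf x.
  pose P := [set j : {classic J} | V j x].
  have Pfin : finite_set P.
    apply: sub_finite_set finS => j Vj; exists x; split => //.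
    exact: nbhs_singleton.
  have es : s x = \sum_(j <- fset_set P) phi j x.
    by apply: fs_sum_eq => // j /phiV.
  have ev : v x = \sum_(j <- fset_set P) phi j x *: f (a j).
    apply: fs_sum_eq => // j; rewrite scaler_eq0 negb_or => /andP[] *.
    exact: phiV.
  have [j0 pj0] := phi1 x.
  have spos : 0 < s x.
    rewrite es; apply: (@sum_pos R _ (fset_set P) (fun j => phi j x) j0) => //.
    - by rewrite in_fset_set //; apply: mem_set; rewrite /P/= -/(V j0 x);
        apply: phiV; rewrite pj0 oner_neq0.
    - by rewrite pj0 ltr01.
  split => //; rewrite es ev.
  apply: (@convex_comb R Y (vsection H x)) => //; last by rewrite -es.
  move=> j /phiV Vjx; exact: ha Vjx.
exists (fun x => (s x)^-1 *: v x); split; last by move=> x; case: (key x).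
move=> x.
have sx : s x != 0 by rewrite gt_eqF //; case: (key x).
exact: (continuousZ (continuousV sx (cs x)) (cv x)).
Qed.

Lemma open_lt_fun (R : realType) (T : topologicalType) (u v : T -> R) :
  continuous u -> continuous v -> open [set t | u t < v t].
Proof.
move=> cu cv.
have -> : [set t | u t < v t] =
    (fun t => v t - u t) @^-1` [set r : R^o | r \in `]0, +oo[].
  by apply/seteqP; split => t /=; rewrite in_itv /= andbT subr_gt0.
apply: open_comp; last exact: interval_open.
by move=> t _; exact: (cvgB (cv t) (cu t)).
Qed.

Lemma diam_ge (R : realType) (Y : normedModType R) (A : set Y) a b :
  A a -> A b -> ((`|a - b|)%:E <= diam A)%E.
Proof. by move=> Aa Ab; apply: ereal_sup_ubound; exists a => //; exists b. Qed.

Lemma diam_le (R : realType) (Y : normedModType R) (A : set Y) (r : R) :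
  (forall a b, A a -> A b -> `|a - b| <= r) -> (diam A <= r%:E)%E.
Proof.
by move=> h; apply: ge_ereal_sup => _ [a Aa [b Ab <-]]; rewrite lee_fin h.
Qed.

Lemma convex_from (R : realType) (Z : lmodType R) (C : set Z) :
  (forall a b t, C a -> C b -> 0 <= t -> t <= 1 -> C (t *: a + (1 - t) *: b)) ->
  convex_set (C : set (convex_lmodType Z)).
Proof.
move=> h a b l /set_mem Ca /set_mem Cb; apply: mem_set.
exact: (h a b l%:num Ca Cb (ge0 _) (le1 _)).
Qed.

Lemma exists_big (R : realType) (N : nat) (d : R) : 0 < d ->
  exists M, forall n, (M <= n)%N -> (N <= n)%N /\ n.+1%:R^-1 < d.
Proof.
move=> d0; have [M _ HM] := near_infty_natSinv_lt (PosNum d0).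
exists (maxn N M) => n; rewrite geq_max => /andP[Nn Mn]; split => //.
exact: HM.
Qed.

Lemma conv_lt (R : realType) (A B t r : R) :
  0 <= A -> 0 <= B -> A < r -> B < r -> 0 <= t -> t <= 1 ->
  t * A + (1 - t) * B < r.
Proof.
move=> A0 B0 Ar Br t0 t1.
have [->|tp] := eqVneq t 0; first by rewrite mul0r add0r subr0 mul1r.
have tpos : 0 < t by rewrite lt_def tp t0.
have h1 : t * A < t * r by rewrite ltr_pM2l.
have h2 : (1 - t) * B <= (1 - t) * r by rewrite ler_wpM2l ?subr_ge0 // ltW.
have -> : r = t * r + (1 - t) * r by ring.
exact: ltr_leD h1 h2.
Qed.

Lemma scale_comb (R : realType) (Z : lmodType R) (a b c : Z) (t : R) :
  t *: a + (1 - t) *: b - c = t *: (a - c) + (1 - t) *: (b - c).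
Proof.
rewrite !scalerBr [(1 - t) *: c]scalerBl scale1r opprB.
by rewrite addrACA addKr.
Qed.

Lemma baire_to_strips (R : realType) (X : topologicalType)
    (Y : normedModType R) (f : X -> Y) :
  baire1 f ->
  exists G : nat -> set (X * Y),
     [/\ (forall n, open_strip (G n)),
         \bigcap_n G n = graph f &
         forall x : X, (fun n => diam (vsection (G n) x)) @ \oo --> 0%E].
Proof.
move=> [g [cg lim]].
pose r n k x := `|g k x - g n x| + n.+1%:R^-1.
pose G n := \bigcup_(k in [set k | (n <= k)%N])
   [set p : X * Y | `|p.2 - g n p.1| < r n k p.1].
have cgk : forall k, continuous (fun p : X * Y => g k p.1).
  move=> k p; apply: continuous_comp; [exact: cvg_fst | exact: cg].
have limN : forall x d, 0 < d -> exists N, forall k, (N <= k)%N -> `|f x - g k x| < d.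
  move=> x d d0; have := lim x => /cvgrPdist_lt /(_ d d0) [N _ HN].
  by exists N => k Nk; apply: HN.
have ipos : forall n, 0 < n.+1%:R^-1 :> R by move=> n; rewrite invr_gt0.
have gr : forall n x, G n (x, f x).
  move=> n x; have [N HN] := limN x _ (ipos n).
  exists (maxn n N); first by rewrite /= leq_maxl.
  rewrite /= /r; have := HN _ (leq_maxr n N).
  have := ler_distD (g (maxn n N) x) (f x) (g n x).
  move=> h1 h2; apply: (le_lt_trans h1); rewrite [X in _ < X]addrC ltrD2r //.
have Gsub : forall n x y, G n (x, y) -> forall d, 0 < d -> (forall k, (n <= k)%N ->
    `|f x - g k x| < d) -> n.+1%:R^-1 < d -> `|y - g n x| < 3 * d.
  move=> n x y [k /= nk Hk] d d0 Hd nd.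
  have h1 := Hd k nk; have h2 := Hd n (leqnn n).
  have := ler_distD (f x) (g k x) (g n x).
  rewrite distrC in h1; rewrite /r /= in Hk.
  move: Hk nd; move: (n.+1%:R^-1) => e Hk nd; lra.
have dbound : forall x d, 0 < d -> exists M, forall n, (M <= n)%N ->
    (0 <= diam (vsection (G n) x))%E /\ (diam (vsection (G n) x) <= (6 * d)%:E)%E.
  move=> x d d0; have [N HN] := limN x d d0; have [M HM] := exists_big N d0.
  exists M => n Mn; have [Nn nd] := HM n Mn; split.
    by have := @diam_ge R Y (vsection (G n) x) _ _ (gr n x) (gr n x);
      rewrite subrr normr0.
  apply: diam_le => a b Ha Hb.
  have HN' : forall k, (n <= k)%N -> `|f x - g k x| < d.
    by move=> k nk; apply: HN; exact: leq_trans Nn nk.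
  have h1 := Gsub n x a Ha d d0 HN' nd.
  have h2 := Gsub n x b Hb d d0 HN' nd.
  have := ler_distD (g n x) a b; rewrite (distrC (g n x) b); lra.
exists G; split.
- move=> n; split.
  + apply: bigcup_open => k _; apply: open_lt_fun.
    * have c1 : continuous (fun p : X * Y => p.2 - g n p.1).
        by move=> p; apply: cvgB; [exact: cvg_snd | exact: cgk].
      by move=> p; exact: (continuous_comp (c1 p) (@norm_continuous _ Y _)).
    * have c1 : continuous (fun p : X * Y => g k p.1 - g n p.1).
        by move=> p; apply: cvgB; exact: cgk.
      move=> p; apply: cvgD; last exact: cvg_cst.
      exact: (continuous_comp (c1 p) (@norm_continuous _ Y _)).
  + move=> x; apply: convex_from => a b t [k nk Ha] [l nl Hb] t0 t1.
    rewrite /= /r in Ha Hb.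
    have t1' : 0 <= 1 - t by rewrite subr_ge0.
    have key : forall m, (n <= m)%N -> `|a - g n x| < r n m x ->
        `|b - g n x| < r n m x -> G n (x, t *: a + (1 - t) *: b).
      move=> m nm ha hb; exists m => //=.
      rewrite scale_comb; apply: le_lt_trans (ler_normD _ _) _.
      rewrite !normrZ (ger0_norm t0) (ger0_norm t1').
      by apply: conv_lt.
    case: (leP (r n k x) (r n l x)) => hkl.
    * by apply: (key l nl) => //; apply: lt_le_trans hkl.
    * by apply: (key k nk) => //; apply: lt_trans hkl.
- apply/seteqP; split.
  + move=> [x y] /= Hall; rewrite /graph /=; apply: contrapT => yne.
    have d0 : 0 < `|y - f x| / 4.
      by rewrite divr_gt0 // normr_gt0 subr_eq0; apply/eqP.
    have [N HN] := limN x _ d0; have [M HM] := exists_big N d0.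
    have [Nn nd] := HM M (leqnn M).
    have HN' : forall k, (M <= k)%N -> `|f x - g k x| < `|y - f x| / 4.
      by move=> k nk; apply: HN; exact: leq_trans Nn nk.
    have h1 := Gsub M x y (Hall M I) _ d0 HN' nd.
    have := ler_distD (g M x) y (f x); have := HN M Nn.
    rewrite (distrC (g M x) (f x)); lra.
  + by move=> [x y]; rewrite /graph /= => -> n _; exact: gr.
- move=> x; apply/fine_cvgP; split.
  + have [M HM] := dbound x 1 ltr01; exists M => // n /= Mn.
    have [h0 h1] := HM n Mn.
    by rewrite ge0_fin_numE // (le_lt_trans h1) // ltry.
  + apply/cvgrPdist_le => e e0.
    have e6 : 0 < e / 6 by rewrite divr_gt0.
    have [M HM] := dbound x _ e6; exists M => // n /= Mn.
    have [h0 h1] := HM n Mn.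
    have fin : diam (vsection (G n) x) \is a fin_num.
      by rewrite ge0_fin_numE // (le_lt_trans h1) // ltry.
    rewrite sub0r normrN ger0_norm ?fine_ge0 //.
    rewrite -lee_fin fineK //; apply: (le_trans h1); rewrite lee_fin.
    by rewrite mulrC -mulrA mulVf // mulr1.
Qed.

Lemma strips_to_baire (R : realType) (X : topologicalType)
    (Y : normedModType R) (f : X -> Y) :
  paracompact X ->
  (exists G : nat -> set (X * Y),
     [/\ (forall n, open_strip (G n)),
         \bigcap_n G n = graph f &
         forall x : X, (fun n => diam (vsection (G n) x)) @ \oo --> 0%E]) ->
  baire1 f.
Proof.
move=> pX [G [sG capG dG]].
have graphG : forall n x, G n (x, f x).
  move=> n x; have : graph f (x, f x) by [].
  by rewrite -capG => /(_ n I).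
pose Hn n := [set p : X * Y | forall m, (m <= n)%N -> G m p].
have oH : forall n, open (Hn n).
  elim=> [|n IH].
    have -> : Hn 0%N = G 0%N.
      apply/seteqP; split => p /=; first by move=> /(_ 0%N (leqnn 0)).
      by move=> Gp m; rewrite leqn0 => /eqP ->.
    exact: (sG 0%N).1.
  have -> : Hn n.+1 = Hn n `&` G n.+1.
    apply/seteqP; split => p /=.
      by move=> h; split; [move=> m mn; apply: h; exact: leqW | apply: h].
    move=> [h1 h2] m; rewrite leq_eqVlt => /orP[/eqP -> // | ].
    by rewrite ltnS; exact: h1.
  by apply: openI => //; exact: (sG n.+1).1.
have cH : forall n x, convex_set (vsection (Hn n) x : set (convex_lmodType Y)).
  move=> n x a b l /set_mem Ha /set_mem Hb; apply: mem_set => m mn.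
  exact: set_mem ((sG m).2 x a b l (mem_set (Ha m mn)) (mem_set (Hb m mn))).
have gH : forall n, graph f `<=` Hn n.
  by move=> n [x y]; rewrite /graph /= => -> m _; exact: graphG.
have hg : forall n, exists g : X -> Y, continuous g /\ forall x, Hn n (x, g x).
  move=> n; exact: selection pX (oH n) (cH n) (gH n).
have [g hg'] := choice hg.
exists g; split; first by move=> n; case: (hg' n).
move=> x; apply/cvgrPdist_lt => e e0.
have /fine_cvgP [fin cv] := dG x.
have := cv => /cvgrPdist_lt /(_ e e0) near2.
near=> n.
have finn : diam (vsection (G n) x) \is a fin_num by near: n.
have hn : `|0 - fine (diam (vsection (G n) x))| < e by near: n.
have hd := @diam_ge R Y (vsection (G n) x) (f x) (g n x) (graphG n x)
  ((hg' n).2 x n (leqnn n)).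
rewrite -(fineK finn) lee_fin in hd.
rewrite sub0r normrN in hn.
exact: le_lt_trans hd (le_lt_trans (ler_norm _) hn).
Unshelve. all: end_near.
Qed.

Unset Implicit Arguments.

Theorem theorem1p3 (R : realType) (X : topologicalType)
  (Y : completeNormedModType R) (f : X -> Y) :
  paracompact X ->
  (baire1 f <->
   exists G : nat -> set (X * Y),
     [/\ (forall n, open_strip (G n)),
         \bigcap_n G n = graph f &
         forall x : X, (fun n => diam (vsection (G n) x)) @ \oo --> 0%E]).
Proof.
move=> pX; split; first exact: baire_to_strips.
exact: strips_to_baire.
Qed.
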